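(* Let $x\in J$. Then $x$ is an extreme point of $B_J$ if and only if $x$ has NPR hereditarily and $\|x\|_2=1$.
   Context: For a real sequence $x=(x(n))_{n\in\mathbb N}$ let $\|x\|_J=\sup\bigl(\sum_{i=1}^n|\sum_{k\in I_i}x(k)|^2\bigr)^{1/2}$ over all $n$ and all families of pairwise disjoint intervals $I_1,\dots,I_n$ of $\mathbb N$ (intervals: nonempty sets of consecutive positive integers, possibly infinite). $J=\{x:\|x\|_J<\infty\}$ with closed unit ball $B_J$; $\|\cdot\|_2$ is the $\ell_2$ norm; for $x\in J$ the series $\sum_n x(n)$ and $\sum_{n\in I}x(n)$ (for intervals $I$) converge. For $A\subset\mathbb N$, $x|_A$ equals $x$ on $A$ and $0$ off $A$. A vector $x\in J$ has non-positive remainder (NPR) if $|\sum_n x(n)|^2\le\sum_n|x(n)|^2$; it has NPR hereditarily if $x|_I$ has NPR for every interval $I$ of $\mathbb N$. *)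

(* Defs.v *)
From Stdlib Require Import Reals Lra List Arith ClassicalDescription.
From Coquelicot Require Import Coquelicot.
Open Scope R_scope.

(* Sequences x = (x(n))_{n in N}; we index the positive integers 1,2,3,...
   by 0,1,2,... (an order-preserving relabelling). *)

Definition is_interval (I : nat -> Prop) : Prop :=
  (exists n, I n) /\
  (forall a b c, (a <= b)%nat -> (b <= c)%nat -> I a -> I c -> I b).

Definition restrict (x : nat -> R) (A : nat -> Prop) : nat -> R :=
  fun k => if excluded_middle_informative (A k) then x k else 0.

Definition isum (x : nat -> R) (I : nat -> Prop) : R := Series (restrict x I).

Definition family_sq (x : nat -> R) (n : nat) (I : nat -> nat -> Prop) : R :=
  fold_right Rplus 0 (map (fun i => (Rabs (isum x (I i))) ^ 2) (seq 0 n)).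

Definition disjoint_family (n : nat) (I : nat -> nat -> Prop) : Prop :=
  (forall i, (i < n)%nat -> is_interval (I i)) /\
  (forall i j, (i < n)%nat -> (j < n)%nat -> i <> j -> forall k, ~ (I i k /\ I j k)).

Definition Jnorm (x : nat -> R) : Rbar :=
  Lub_Rbar (fun r => exists n I, disjoint_family n I /\ r = sqrt (family_sq x n I)).

Definition inJ (x : nat -> R) : Prop := Rbar_lt (Jnorm x) p_infty.

Definition in_BJ (x : nat -> R) : Prop := inJ x /\ Rbar_le (Jnorm x) 1.

Definition extreme_BJ (x : nat -> R) : Prop :=
  in_BJ x /\
  forall (y z : nat -> R) (t : R), in_BJ y -> in_BJ z -> 0 < t < 1 ->
    (forall n, x n = t * y n + (1 - t) * z n) ->
    (forall n, y n = z n).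

Definition l2norm (x : nat -> R) : R := sqrt (Series (fun n => (Rabs (x n)) ^ 2)).

Definition NPR (x : nat -> R) : Prop :=
  (Rabs (Series x)) ^ 2 <= Series (fun n => (Rabs (x n)) ^ 2).

Definition NPR_hered (x : nat -> R) : Prop :=
  forall I, is_interval I -> NPR (restrict x I).

(* Main.v *)
Require Import Defs.
From Stdlib Require Import Reals Lra Lia List Arith ClassicalDescription Classical.
From Coquelicot Require Import Coquelicot.
Open Scope R_scope.

Definition convex (T : nat -> Prop) : Prop :=
  forall a b c, (a <= b)%nat -> (b <= c)%nat -> T a -> T c -> T b.

Definition ind (P : Prop) : R := if excluded_middle_informative P then 1 else 0.

Lemma restrict_ext x A B : (forall k, A k <-> B k) -> forall k, restrict x A k = restrict x B k.
Proof.
  intros H k; unfold restrict.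
  destruct (excluded_middle_informative (A k)) as [a|a];
  destruct (excluded_middle_informative (B k)) as [b|b]; auto;
  exfalso; first [apply b; apply H; assumption | apply a; apply H; assumption].
Qed.

Lemma isum_ext x A B : (forall k, A k <-> B k) -> isum x A = isum x B.
Proof. intros H; unfold isum; apply Series_ext; apply restrict_ext; auto. Qed.

Lemma sum_n_zero (a : nat -> R) N : (forall k, (k <= N)%nat -> a k = 0) -> sum_n a N = 0.
Proof.
  induction N; intros H.
  - rewrite sum_O; apply H; lia.
  - rewrite sum_Sn, IHN by (intros; apply H; lia). rewrite H by lia.
    unfold plus; simpl; ring.
Qed.

Lemma is_series_fin (a : nat -> R) N : (forall k, (N < k)%nat -> a k = 0) -> is_series a (sum_n a N).
Proof.
  intros H. apply filterlim_ext_loc with (fun _ => sum_n a N).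
  - exists N. intros n Hn. induction Hn. reflexivity.
    rewrite sum_Sn, H by lia. rewrite <- IHHn. rewrite Rplus_0_r. reflexivity.
  - apply filterlim_const.
Qed.

Lemma ex_series_fin (a : nat -> R) N : (forall k, (N < k)%nat -> a k = 0) -> ex_series a.
Proof. intros H; eexists; exact (is_series_fin a N H). Qed.

Lemma Series_fin (a : nat -> R) N : (forall k, (N < k)%nat -> a k = 0) -> Series a = sum_n a N.
Proof. intros H; apply is_series_unique, is_series_fin; auto. Qed.

Lemma Series_zero : Series (fun _ => 0) = 0.
Proof. rewrite (Series_fin _ 0) by auto. rewrite sum_O; auto. Qed.

Lemma Series_point (c : R) p : Series (fun k => if Nat.eq_dec k p then c else 0) = c.
Proof.
  rewrite (Series_fin _ p).
  - destruct p. rewrite sum_O; destruct (Nat.eq_dec 0 0); auto; lia.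
    rewrite sum_Sn, sum_n_zero. destruct (Nat.eq_dec (S p) (S p)); [|lia].
    unfold plus; simpl; ring.
    intros k Hk; destruct (Nat.eq_dec k (S p)); auto; lia.
  - intros k Hk; destruct (Nat.eq_dec k p); auto; lia.
Qed.

Lemma isum_empty x A : (forall k, ~ A k) -> isum x A = 0.
Proof.
  intros H; unfold isum. rewrite <- Series_zero. apply Series_ext; intros k.
  unfold restrict; destruct (excluded_middle_informative (A k)); auto; exfalso; eapply H; eauto.
Qed.

Lemma isum_single x i : isum x (fun k => k = i) = x i.
Proof.
  unfold isum. rewrite <- (Series_point (x i) i). apply Series_ext; intros k.
  unfold restrict; destruct (excluded_middle_informative (k = i)); destruct (Nat.eq_dec k i); subst; auto; lia.
Qed.

Lemma ex_series_plusR (a b : nat -> R) : ex_series a -> ex_series b -> ex_series (fun n => a n + b n).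
Proof. intros Ha Hb. exact (ex_series_plus a b Ha Hb). Qed.
Lemma ex_series_scalR (c : R) (a : nat -> R) : ex_series a -> ex_series (fun n => c * a n).
Proof. intros Ha. exact (ex_series_scal_l c a Ha). Qed.

Lemma ex_series_extR (a b : nat -> R) : (forall n, a n = b n) -> ex_series a -> ex_series b.
Proof. intros H Ha. exact (ex_series_ext a b H Ha). Qed.

Lemma fin_good x T N : (forall k, T k -> (k <= N)%nat) -> ex_series (restrict x T).
Proof.
  intros H; apply ex_series_fin with N; intros k Hk; unfold restrict;
  destruct (excluded_middle_informative (T k)) as [t|t]; auto. apply H in t; lia.
Qed.

Lemma ex_series_fin_diff (a b : nat -> R) N : ex_series a -> (forall k, (N < k)%nat -> a k = b k) -> ex_series b.
Proof.
  intros Ha H.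
  assert (Hd : ex_series (fun k => b k - a k)).
  { apply ex_series_fin with N; intros k Hk; rewrite H by auto; ring. }
  apply (ex_series_extR (fun k => a k + (b k - a k))).
  intros; ring.
  apply ex_series_plusR; auto.
Qed.

Lemma interval_good x T : ex_series x -> convex T -> ex_series (restrict x T).
Proof.
  intros Hx HT.
  destruct (classic (exists B, forall k, T k -> (k <= B)%nat)) as [[B HB]|HB].
  - apply fin_good with B; auto.
  - destruct (classic (exists a, T a)) as [[a Ha]|Hne].
    + apply ex_series_fin_diff with x a; auto.
      intros k Hk. unfold restrict. destruct (excluded_middle_informative (T k)) as [t|t]; auto.
      exfalso; apply t.
      assert (exists k', T k' /\ (k <= k')%nat) as [k' [Tk' Hk']].
      { apply NNPP; intro C; apply HB; exists k; intros j Tj.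
        destruct (le_lt_dec j k); auto. exfalso; apply C; exists j; split; auto; lia. }
      apply (HT a k k'); auto; lia.
    + apply fin_good with 0%nat. intros k Tk; exfalso; apply Hne; eauto.
Qed.

Lemma good_union x A B : ex_series (restrict x A) -> ex_series (restrict x B) ->
  (forall k, ~ (A k /\ B k)) ->
  ex_series (restrict x (fun k => A k \/ B k)) /\
  isum x (fun k => A k \/ B k) = isum x A + isum x B.
Proof.
  intros HA HB Hd.
  assert (E : forall k, restrict x (fun k => A k \/ B k) k = restrict x A k + restrict x B k).
  { intros k; unfold restrict.
    destruct (excluded_middle_informative (A k \/ B k)) as [u|u];
    destruct (excluded_middle_informative (A k)) as [a|a];
    destruct (excluded_middle_informative (B k)) as [b|b]; try ring; exfalso; first [tauto | apply (Hd k); tauto]. }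
  split.
  - apply (ex_series_extR (fun k => restrict x A k + restrict x B k)).
    intros; rewrite E; auto. apply ex_series_plusR; auto.
  - unfold isum. rewrite <- Series_plus by auto. apply Series_ext; auto.
Qed.

Lemma good_diff x A B N : ex_series (restrict x A) -> (forall k, B k -> (k <= N)%nat) ->
  ex_series (restrict x (fun k => A k /\ ~ B k)).
Proof.
  intros HA HB. apply ex_series_fin_diff with (restrict x A) N; auto.
  intros k Hk; unfold restrict.
  destruct (excluded_middle_informative (A k /\ ~ B k)) as [u|u];
  destruct (excluded_middle_informative (A k)) as [a|a]; auto.
  all: exfalso; first [tauto | apply u; split; auto; intro b; apply HB in b; lia].
Qed.
Fixpoint fs (n : nat) (f : nat -> R) : R :=
  match n with O => 0 | S m => fs m f + f m end.

Lemma fold_plus_c (l : list R) c : fold_right Rplus c l = fold_right Rplus 0 l + c.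
Proof. induction l; simpl; [ring| rewrite IHl; ring]. Qed.

Lemma family_sq_fs x n I : family_sq x n I = fs n (fun i => (Rabs (isum x (I i)))^2).
Proof.
  unfold family_sq. induction n. reflexivity.
  rewrite seq_S, map_app, fold_right_app, fold_plus_c, IHn. simpl. ring.
Qed.

Lemma fs_ext n f g : (forall i, (i < n)%nat -> f i = g i) -> fs n f = fs n g.
Proof. induction n; intros H; simpl; auto. rewrite IHn by (intros; apply H; lia). rewrite H by lia; auto. Qed.

Lemma fs_le n f g : (forall i, (i < n)%nat -> f i <= g i) -> fs n f <= fs n g.
Proof. induction n; intros H; simpl. lra. assert (f n <= g n) by (apply H; lia).
  assert (fs n f <= fs n g) by (apply IHn; intros; apply H; lia). lra. Qed.

Lemma fs_plus n f g : fs n (fun i => f i + g i) = fs n f + fs n g.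
Proof. induction n; simpl; [ring | rewrite IHn; ring]. Qed.

Lemma fs_scal n c f : fs n (fun i => c * f i) = c * fs n f.
Proof. induction n; simpl; [ring | rewrite IHn; ring]. Qed.

Lemma fs_const0 n : fs n (fun _ => 0) = 0.
Proof. induction n; simpl; [ring | rewrite IHn; ring]. Qed.

Lemma fs_nonneg n f : (forall i, (i < n)%nat -> 0 <= f i) -> 0 <= fs n f.
Proof. intros H. apply Rle_trans with (fs n (fun _ => 0)); [rewrite fs_const0; lra|]. apply fs_le; auto. Qed.

Lemma fs_update n f g j : (j < n)%nat -> (forall i, (i < n)%nat -> i <> j -> f i = g i) ->
  fs n f = fs n g + f j - g j.
Proof.
  induction n; intros Hj H. lia. simpl.
  destruct (Nat.eq_dec j n).
  - subst. rewrite (fs_ext n f g) by (intros; apply H; lia). ring.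
  - rewrite IHn by (try lia; intros; apply H; lia). rewrite (H n) by lia. ring.
Qed.

Lemma fs_none n (P : nat -> Prop) f : (forall i, (i < n)%nat -> ~ P i) ->
  fs n (fun i => if excluded_middle_informative (P i) then f i else 0) = 0.
Proof.
  intros H. transitivity (fs n (fun _ => 0)); [|apply fs_const0]. apply fs_ext. intros i Hi.
  destruct (excluded_middle_informative (P i)); auto. exfalso; apply (H i); auto.
Qed.

Lemma fs_unique n (P : nat -> Prop) f i0 : (i0 < n)%nat -> P i0 ->
  (forall j, (j < n)%nat -> j <> i0 -> ~ P j) ->
  fs n (fun i => if excluded_middle_informative (P i) then f i else 0) = f i0.
Proof.
  intros Hi0 HP H.
  rewrite (fs_update n _ (fun _ => 0) i0) by (auto; intros i Hi Hne;
    destruct (excluded_middle_informative (P i)); auto; exfalso; apply (H i); auto).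
  rewrite fs_const0. destruct (excluded_middle_informative (P i0)); [ring | contradiction].
Qed.

Lemma fs_disj_le n (P : nat -> Prop) (g : R) : 0 <= g ->
  (forall i j, (i < n)%nat -> (j < n)%nat -> i <> j -> ~ (P i /\ P j)) ->
  fs n (fun i => if excluded_middle_informative (P i) then g else 0) <= g.
Proof.
  intros Hg H.
  destruct (classic (exists i, (i < n)%nat /\ P i)) as [[i0 [Hi HP]]|Hn].
  - rewrite (fs_unique n P (fun _ => g) i0); auto. lra.
    intros j Hj Hne Pj. apply (H j i0); auto.
  - rewrite fs_none; auto. intros i Hi Pi; apply Hn; eauto.
Qed.

Definition fam_bd x M := forall n I, disjoint_family n I -> family_sq x n I <= M.

Lemma family_sq_nonneg x n I : 0 <= family_sq x n I.
Proof. rewrite family_sq_fs. apply fs_nonneg. intros. apply pow2_ge_0. Qed.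

Lemma inJ_bd x : inJ x -> exists M, fam_bd x M.
Proof.
  unfold inJ, Jnorm. intros H.
  destruct (Lub_Rbar_correct (fun r => exists n I, disjoint_family n I /\ r = sqrt (family_sq x n I))) as [Hub _].
  revert H Hub.
  destruct (Lub_Rbar _) as [l| |]; simpl; intros H Hub; try contradiction.
  - exists (l^2). intros n I HI.
    assert (Hs := Hub (sqrt (family_sq x n I)) (ex_intro _ n (ex_intro _ I (conj HI eq_refl)))).
    simpl in Hs. rewrite <- (sqrt_sqrt (family_sq x n I)) by apply family_sq_nonneg.
    assert (0 <= sqrt (family_sq x n I)) by apply sqrt_pos. simpl. nra.
  - exfalso. assert (Hs := Hub (sqrt (family_sq x 0 (fun _ _ => False)))).
    apply Hs. exists 0%nat, (fun _ _ => False). split; auto.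
    split; intros; lia.
Qed.

Lemma bd_BJ x : fam_bd x 1 -> in_BJ x.
Proof.
  intros H.
  assert (Hl : Rbar_le (Jnorm x) 1).
  { unfold Jnorm. apply (proj2 (Lub_Rbar_correct _)).
    intros r [n [I [HI ->]]]. simpl. rewrite <- sqrt_1. apply sqrt_le_1_alt. apply H; auto. }
  split; auto. unfold inJ. destruct (Jnorm x); simpl in *; auto.
Qed.

Lemma BJ_bd x : in_BJ x -> fam_bd x 1.
Proof.
  intros [_ H] n I HI. unfold Jnorm in H.
  destruct (Lub_Rbar_correct (fun r => exists n I, disjoint_family n I /\ r = sqrt (family_sq x n I))) as [Hub _].
  assert (Hs := Hub (sqrt (family_sq x n I)) (ex_intro _ n (ex_intro _ I (conj HI eq_refl)))).
  assert (Rbar_le (sqrt (family_sq x n I)) 1) by (eapply Rbar_le_trans; eauto).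
  simpl in H0. rewrite <- (sqrt_sqrt (family_sq x n I)) by apply family_sq_nonneg.
  assert (0 <= sqrt (family_sq x n I)) by apply sqrt_pos. nra.
Qed.

Definition gfam n (I : nat -> nat -> Prop) : Prop :=
  (forall i, (i < n)%nat -> convex (I i)) /\
  (forall i j, (i < n)%nat -> (j < n)%nat -> i <> j -> forall k, ~ (I i k /\ I j k)).

Lemma gfam_reduce x n I : gfam n I -> exists m J, disjoint_family m J /\
  family_sq x m J = family_sq x n I /\ (forall i, (i < m)%nat -> exists j, (j < n)%nat /\ J i = I j).
Proof.
  induction n; intros [Hc Hd].
  - exists 0%nat, I. split; [split; intros; lia|]. split; auto. intros; lia.
  - destruct IHn as [m [J [HJ [HJv HJi]]]].
    { split; intros; [apply Hc| apply Hd]; auto; lia. }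
    rewrite !family_sq_fs in *. cbn [fs].
    destruct (classic (exists k, I n k)) as [Hne|Hem].
    + exists (S m), (fun i => if Nat.eq_dec i m then I n else J i).
      split; [split|split].
      * intros i Hi. destruct (Nat.eq_dec i m). split; auto. apply Hc; lia.
        apply HJ; lia.
      * intros i j Hi Hj Hij k. destruct (Nat.eq_dec i m), (Nat.eq_dec j m); subst; try lia.
        -- destruct (HJi j) as [j' [Hj' E]]; [lia|]. rewrite E. apply Hd; lia.
        -- destruct (HJi i) as [j' [Hj' E]]; [lia|]. rewrite E. apply Hd; lia.
        -- apply HJ; lia.
      * rewrite family_sq_fs. cbn [fs]. destruct (Nat.eq_dec m m); [|lia].
        rewrite <- HJv. f_equal. apply fs_ext. intros i Hi.
        destruct (Nat.eq_dec i m); auto; lia.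
      * intros i Hi. destruct (Nat.eq_dec i m). exists n; split; auto.
        destruct (HJi i) as [j' [Hj' E]]; [lia|]. exists j'; split; auto.
    + exists m, J. split; auto. split.
      * rewrite family_sq_fs, HJv, isum_empty; [|intros k Hk; apply Hem; exists k; exact Hk].
        rewrite Rabs_R0. cbn [fs]. ring.
      * intros i Hi. destruct (HJi i) as [j' [Hj' E]]; auto. exists j'; split; auto.
Qed.

Lemma gfam_bd x M n I : fam_bd x M -> gfam n I -> family_sq x n I <= M.
Proof.
  intros H HI. destruct (gfam_reduce x n I HI) as [m [J [HJ [E _]]]].
  rewrite <- E. apply H; auto.
Qed.

Lemma disj_gfam n I : disjoint_family n I -> gfam n I.
Proof. intros [H1 H2]. split; auto. intros i Hi; exact (proj2 (H1 i Hi)). Qed.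

Lemma single_bd x M T : fam_bd x M -> convex T -> (isum x T)^2 <= M.
Proof.
  intros H HT. assert (Hg : gfam 1 (fun _ => T)) by (split; intros; auto; lia).
  assert (B := gfam_bd x M 1 _ H Hg). rewrite family_sq_fs in B. cbn [fs] in B.
  rewrite pow2_abs in B. lra.
Qed.

Lemma ex_series_leR (a b : nat -> R) : (forall n, Rabs (a n) <= b n) -> ex_series b -> ex_series a.
Proof. intros H Hb. exact (ex_series_le a b H Hb). Qed.

Lemma fs_Series n (f : nat -> nat -> R) : (forall i, (i<n)%nat -> ex_series (f i)) ->
  fs n (fun i => Series (f i)) = Series (fun k => fs n (fun i => f i k)) /\
  ex_series (fun k => fs n (fun i => f i k)).
Proof.
  induction n; intros H; simpl.
  - split. symmetry; apply Series_zero. apply ex_series_fin with 0%nat; auto.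
  - destruct IHn as [E Ex]. intros; apply H; lia.
    split.
    + rewrite E, <- Series_plus; [reflexivity | exact Ex | apply H; lia].
    + apply ex_series_plusR; auto.
Qed.

Lemma fs_series_disj (g : nat -> R) n (S : nat -> nat -> Prop) (B : nat -> Prop) :
  (forall k, 0 <= g k) -> ex_series (restrict g B) ->
  (forall i, (i<n)%nat -> forall k, S i k -> B k) ->
  (forall i j, (i<n)%nat -> (j<n)%nat -> i<>j -> forall k, ~(S i k /\ S j k)) ->
  fs n (fun i => isum g (S i)) <= isum g B.
Proof.
  intros Hg HB HS Hd.
  assert (Hle : forall k, 0 <= fs n (fun i => restrict g (S i) k) <= restrict g B k).
  { intros k. split.
    - apply fs_nonneg. intros i _. unfold restrict. destruct (excluded_middle_informative _); auto; lra.
    - unfold restrict at 2. destruct (excluded_middle_informative (B k)) as [b|b].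
      + apply (fs_disj_le n (fun i => S i k) (g k)); auto.
      + unfold restrict. rewrite (fs_none n (fun i => S i k)); [lra|].
        intros i Hi Si; apply b; eapply HS; eauto. }
  assert (Hex : forall i, (i<n)%nat -> ex_series (restrict g (S i))).
  { intros i Hi. apply ex_series_leR with (restrict g B); auto.
    intros k. unfold restrict. destruct (excluded_middle_informative (S i k)) as [s|s];
    destruct (excluded_middle_informative (B k)) as [b|b].
    rewrite Rabs_pos_eq; auto; lra. exfalso; apply b; eapply HS; eauto.
    rewrite Rabs_R0; auto. rewrite Rabs_R0; lra. }
  unfold isum. destruct (fs_Series n (fun i => restrict g (S i)) Hex) as [E _].
  rewrite E. apply Series_le; auto.
Qed.

Lemma isum_block x n m : (n <= m)%nat -> isum x (fun k => (n <= k <= m)%nat) = sum_n_m x n m.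
Proof.
  intros Hnm. unfold isum. rewrite (Series_fin _ m).
  2:{ intros k Hk. unfold restrict. destruct (excluded_middle_informative _); auto; lia. }
  unfold sum_n. destruct n.
  - apply sum_n_m_ext_loc. intros k Hk. unfold restrict. destruct (excluded_middle_informative _); auto; lia.
  - rewrite (sum_n_m_Chasles _ 0 n m) by lia.
    rewrite (sum_n_m_ext_loc _ (fun _ => zero) 0 n), sum_n_m_const_zero.
    rewrite plus_zero_l. apply sum_n_m_ext_loc.
    intros k Hk. unfold restrict. destruct (excluded_middle_informative _); auto; lia.
    intros k Hk. unfold restrict. destruct (excluded_middle_informative _); auto; lia.
Qed.

Lemma bd_ex_series x M : fam_bd x M -> ex_series x.
Proof.
  intros H. apply (ex_series_Cauchy (V := R_CompleteNormedModule)). apply NNPP; intro HC.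
  unfold Cauchy_series in HC. apply not_all_ex_not in HC as [eps HC].
  assert (HN : forall N, exists n m, (N <= n)%nat /\ (n <= m)%nat /\ eps <= Rabs (sum_n_m x n m)).
  { intros N. apply NNPP; intro C. apply HC. exists N. intros n m Hn Hm.
    destruct (le_lt_dec n m).
    - apply Rnot_le_lt; intro Hle; apply C; exists n, m; auto.
    - rewrite sum_n_m_zero by lia. change (Rabs 0 < eps). rewrite Rabs_R0. apply cond_pos. }
  assert (HK : forall K, exists N I, disjoint_family K I /\
     (forall i k, (i<K)%nat -> I i k -> (k < N)%nat) /\ INR K * eps^2 <= family_sq x K I).
  { induction K.
    - exists 0%nat, (fun _ _ => False). split; [split; intros; lia|]. split; [intros; lia|].
      simpl. unfold family_sq. simpl. lra.
    - destruct IHK as [N [I [HI [HB HV]]]].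
      destruct (HN N) as [n [m [Hn [Hnm He]]]].
      exists (S m), (fun i => if Nat.eq_dec i K then (fun k => (n <= k <= m)%nat) else I i).
      split; [split|split].
      + intros i Hi. destruct (Nat.eq_dec i K).
        * split. exists n; lia. intros a b c ? ? ? ?; lia.
        * apply HI; lia.
      + intros i j Hi Hj Hij k. destruct (Nat.eq_dec i K), (Nat.eq_dec j K); subst; try lia.
        * intros [A B]. apply HB in B; lia.
        * intros [A B]. apply HB in A; lia.
        * apply HI; lia.
      + intros i k Hi. destruct (Nat.eq_dec i K). lia. intros Hk; apply HB in Hk; lia.
      + rewrite family_sq_fs in *. cbn [fs]. destruct (Nat.eq_dec K K); [|lia].
        rewrite (fs_ext K _ (fun i => Rabs (isum x (I i)) ^ 2)).
        2:{ intros i Hi. destruct (Nat.eq_dec i K); auto; lia. }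
        rewrite isum_block by auto. rewrite S_INR.
        assert (0 < eps) by apply cond_pos.
        assert (eps ^2 <= Rabs (sum_n_m x n m) ^ 2) by (simpl; nra). nra. }
  destruct (INR_unbounded (M / eps^2)) as [K HKu].
  destruct (HK K) as [N [I [HI [_ HV]]]].
  assert (Hb := H K I HI).
  assert (0 < eps) by apply cond_pos.
  assert (0 < eps^2) by (simpl; nra).
  assert (M < INR K * eps^2).
  { apply Rmult_lt_reg_r with (/ eps^2). apply Rinv_0_lt_compat; auto.
    rewrite Rmult_assoc, Rinv_r by lra. rewrite Rmult_1_r. unfold Rdiv in HKu. lra. }
  lra.
Qed.

Lemma nat_min (T : nat -> Prop) : (exists k, T k) -> exists c, T c /\ forall k, T k -> (c <= k)%nat.
Proof.
  intros [k0 Hk0]. apply NNPP; intro C.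
  assert (forall m, forall j, (j <= m)%nat -> ~ T j).
  { induction m; intros j Hj Tj.
    - apply C; exists j; split; auto; intros; lia.
    - apply C; exists j; split; auto. intros k Tk. destruct (le_lt_dec j k); auto.
      exfalso; apply (IHm k); auto; lia. }
  apply (H k0 k0); auto.
Qed.

Lemma nat_max (T : nat -> Prop) N : (exists k, T k) -> (forall k, T k -> (k <= N)%nat) ->
  exists d, T d /\ forall k, T k -> (k <= d)%nat.
Proof.
  intros [k0 Hk0] HB. apply NNPP; intro C.
  assert (forall j, exists m, T m /\ (j <= m)%nat).
  { induction j. exists k0; split; auto; lia.
    destruct IHj as [m [Tm Hm]]. apply NNPP; intro D. apply C. exists m; split; auto.
    intros k Tk. destruct (le_lt_dec k m); auto. exfalso; apply D; exists k; split; auto; lia. }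
  destruct (H (S N)) as [m [Tm Hm]]. apply HB in Tm; lia.
Qed.

Lemma conv_rep T N : convex T -> (exists k, T k) -> (forall k, T k -> (k <= N)%nat) ->
  exists c d, (c <= d)%nat /\ forall k, T k <-> (c <= k <= d)%nat.
Proof.
  intros HT Hne HB. destruct (nat_min T Hne) as [c [Tc Hc]].
  destruct (nat_max T N Hne HB) as [d [Td Hd]].
  exists c, d. split. apply Hc; auto. intros k; split.
  - intros Tk; split; auto.
  - intros [H1 H2]. apply (HT c k d); auto.
Qed.

Definition gsq (x : nat -> R) : nat -> R := fun k => Rabs (x k) ^ 2.
Definition Iv (p r : nat) : nat -> Prop := fun k => (p <= k <= r)%nat.

Lemma gsq_nonneg x k : 0 <= gsq x k.
Proof. unfold gsq; rewrite pow2_abs; apply pow2_ge_0. Qed.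

Lemma conv_inter A B : convex A -> convex B -> convex (fun k => A k /\ B k).
Proof. intros HA HB a b c H1 H2 [A1 B1] [A2 B2]; split; [apply (HA a b c)|apply (HB a b c)]; auto. Qed.

Lemma conv_union A B m : convex A -> convex B -> A m -> B m -> convex (fun k => A k \/ B k).
Proof.
  intros HA HB Am Bm a b c H1 H2 Ha Hc.
  destruct Ha as [Aa|Ba]; destruct Hc as [Ac|Bc].
  - left; apply (HA a b c); auto.
  - destruct (le_lt_dec b m). left; apply (HA a b m); auto. right; apply (HB m b c); auto; lia.
  - destruct (le_lt_dec b m). right; apply (HB a b m); auto. left; apply (HA m b c); auto; lia.
  - right; apply (HB a b c); auto.
Qed.

Lemma conv_empty : convex (fun _ => False).
Proof. intros a b c _ _ F; destruct F. Qed.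

Lemma conv_iv p r : convex (Iv p r).
Proof. unfold Iv; intros a b c ? ? ? ?; lia. Qed.

Lemma conv_diff_iv T p r : convex T -> ~(T p /\ T r) -> convex (fun k => T k /\ ~ Iv p r k).
Proof.
  unfold Iv. intros HT Hn a b c H1 H2 [Ta Na] [Tc Nc]. split. apply (HT a b c); auto.
  intros Hb. apply Hn. split; [apply (HT a p c)|apply (HT a r c)]; auto; lia.
Qed.

Lemma conv_compl T p r : convex T -> (T p \/ T r) -> convex (fun k => Iv p r k /\ ~ T k).
Proof.
  unfold Iv. intros HT Hpr a b c H1 H2 [Ia Na] [Ic Nc]. split. lia.
  intros Tb. destruct Hpr as [Tp|Tr].
  - apply Na. apply (HT p a b); auto; lia.
  - apply Nc. apply (HT b c r); auto; lia.
Qed.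

Lemma conv_of_fam n I i : disjoint_family n I -> (i < n)%nat -> convex (I i).
Proof. intros [H _] Hi. exact (proj2 (H i Hi)). Qed.

Definition HNPR x p r := forall T, convex T -> (forall k, T k -> Iv p r k) -> ~(T p /\ T r) ->
  (isum x T)^2 <= isum (gsq x) T.

Lemma iv_good x p r T : (forall k, T k -> Iv p r k) -> ex_series (restrict x T).
Proof. intros H; apply fin_good with r. intros k Tk; apply H in Tk; unfold Iv in Tk; lia. Qed.

Lemma split_iv y p r T : isum y (Iv p r) = isum y (fun k => T k /\ Iv p r k) + isum y (fun k => Iv p r k /\ ~ T k).
Proof.
  destruct (good_union y (fun k => T k /\ Iv p r k) (fun k => Iv p r k /\ ~ T k)
    (iv_good y p r _ (fun k H => proj2 H)) (iv_good y p r _ (fun k H => proj1 H))) as [_ E].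
  { intros k [[A _] [_ B]]; auto. }
  rewrite <- E. apply isum_ext. intros k. split. intros Hk. destruct (classic (T k)); tauto. tauto.
Qed.

Lemma prefix_sign x p r T : HNPR x p r -> isum (gsq x) (Iv p r) < (isum x (Iv p r))^2 ->
  convex T -> (T p \/ T r) -> ~(T p /\ T r) ->
  0 < isum x (fun k => T k /\ Iv p r k) * (isum x (Iv p r) - isum x (fun k => T k /\ Iv p r k)).
Proof.
  intros H Hf HT H1 H2.
  rewrite (split_iv x p r T) in *. rewrite (split_iv (gsq x) p r T) in Hf.
  assert (A1 := H (fun k => T k /\ Iv p r k) (conv_inter _ _ HT (conv_iv p r)) (fun k H => proj2 H) ltac:(tauto)).
  assert (A2 := H (fun k => Iv p r k /\ ~ T k) (conv_compl T p r HT H1) (fun k H => proj1 H) ltac:(tauto)).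
  set (a := isum x (fun k => T k /\ Iv p r k)) in *.
  set (b := isum x (fun k => Iv p r k /\ ~ T k)) in *.
  replace (a + b - a) with b by ring. nra.
Qed.

Lemma sign_lemma u a s : 0 < a * (s - a) -> u * a <= Rmax 0 (u * s).
Proof.
  intros H. unfold Rmax. destruct (Rle_dec 0 (u * s)).
  - assert (H1 : 0 < s * (s - a)) by nra.
    assert (0 <= (u * s) * (s - a)^2) by (apply Rmult_le_pos; auto; apply pow2_ge_0).
    assert (0 <= u * (s - a)).
    { apply Rmult_le_reg_r with (s * (s - a)); auto. rewrite Rmult_0_l. nra. }
    nra.
  - assert (H1 : 0 < s * a) by nra.
    assert ((u * s) * a^2 <= 0) by (apply Rmult_le_0_r; [lra | apply pow2_ge_0]).
    assert (u * a <= 0).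
    { apply Rmult_le_reg_r with (s * a); auto. rewrite Rmult_0_l. nra. }
    nra.
Qed.

Lemma G00 x p r n I : fam_bd x 1 -> disjoint_family n I -> (forall i, (i<n)%nat -> ~(I i p /\ I i r)) ->
  fs n (fun i => (isum x (fun k => I i k /\ ~ Iv p r k))^2) + (isum x (Iv p r))^2 <= 1.
Proof.
  intros Hbd HI Hno.
  set (J := fun i => if lt_dec i n then (fun k => I i k /\ ~ Iv p r k) else Iv p r).
  assert (HJ : gfam (S n) J).
  { split.
    - intros i Hi. unfold J. destruct (lt_dec i n).
      + apply conv_diff_iv; auto. apply (conv_of_fam n); auto.
      + apply conv_iv.
    - intros i j Hi Hj Hij k. unfold J. destruct (lt_dec i n), (lt_dec j n); try lia.
      + intros [[A _] [B _]]. apply (proj2 HI i j) with k; auto.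
      + tauto.
      + tauto. }
  assert (B := gfam_bd x 1 (S n) J Hbd HJ). rewrite family_sq_fs in B. cbn [fs] in B.
  unfold J at 2 in B. destruct (lt_dec n n); [lia|].
  rewrite (fs_ext n _ (fun i => (isum x (fun k => I i k /\ ~ Iv p r k))^2)) in B.
  rewrite pow2_abs in B. auto.
  intros i Hi. unfold J. destruct (lt_dec i n); [|lia]. apply pow2_abs.
Qed.

Lemma G10 x p r n I iA m : fam_bd x 1 -> ex_series x -> disjoint_family n I -> (forall i, (i<n)%nat -> ~(I i p /\ I i r)) ->
  (iA < n)%nat -> I iA m -> Iv p r m ->
  fs n (fun i => (isum x (fun k => I i k /\ ~ Iv p r k))^2)
   - (isum x (fun k => I iA k /\ ~ Iv p r k))^2
   + (isum x (fun k => I iA k /\ ~ Iv p r k) + isum x (Iv p r))^2 <= 1.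
Proof.
  intros Hbd Hx HI Hno HiA Hm Ivm.
  set (J := fun i => if Nat.eq_dec i iA then (fun k => I iA k \/ Iv p r k) else (fun k => I i k /\ ~ Iv p r k)).
  assert (HJ : gfam n J).
  { split.
    - intros i Hi. unfold J. destruct (Nat.eq_dec i iA).
      + apply conv_union with m; auto. apply (conv_of_fam n); auto. apply conv_iv.
      + apply conv_diff_iv; auto. apply (conv_of_fam n); auto.
    - intros i j Hi Hj Hij k. unfold J. destruct (Nat.eq_dec i iA), (Nat.eq_dec j iA); subst; try lia.
      + intros [[A|A] [B C]]; auto. apply (proj2 HI iA j) with k; auto.
      + intros [[B C] [A|A]]; auto. apply (proj2 HI i iA) with k; auto.
      + intros [[A _] [B _]]. apply (proj2 HI i j) with k; auto. }
  assert (B := gfam_bd x 1 n J Hbd HJ). rewrite family_sq_fs in B.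
  rewrite (fs_update n _ (fun i => (isum x (fun k => I i k /\ ~ Iv p r k))^2) iA) in B; auto.
  2:{ intros i Hi Hne. unfold J. destruct (Nat.eq_dec i iA); [lia|]. apply pow2_abs. }
  unfold J in B. destruct (Nat.eq_dec iA iA); [|lia]. rewrite pow2_abs in B.
  assert (gI : ex_series (restrict x (I iA))) by (apply interval_good; auto; apply (conv_of_fam n); auto).
  assert (gD := good_diff x (I iA) (Iv p r) r gI (fun k H => proj2 H)).
  assert (gV := iv_good x p r (Iv p r) (fun k H => H)).
  rewrite <- (proj2 (good_union x _ _ gD gV (fun k H => proj2 (proj1 H) (proj2 H)))).
  rewrite (isum_ext x (fun k => I iA k \/ Iv p r k) (fun k => (I iA k /\ ~ Iv p r k) \/ Iv p r k)) in B.
  lra.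
  intros k; split; [intros [A|A]; [destruct (classic (Iv p r k))|]|]; tauto.
Qed.

Lemma G11 x p r n I iA iB : fam_bd x 1 -> ex_series x -> disjoint_family n I -> (forall i, (i<n)%nat -> ~(I i p /\ I i r)) ->
  (iA < n)%nat -> (iB < n)%nat -> I iA p -> I iB r -> (p <= r)%nat ->
  fs n (fun i => (isum x (fun k => I i k /\ ~ Iv p r k))^2)
   - (isum x (fun k => I iA k /\ ~ Iv p r k))^2
   - (isum x (fun k => I iB k /\ ~ Iv p r k))^2
   + (isum x (fun k => I iA k /\ ~ Iv p r k) + isum x (Iv p r) + isum x (fun k => I iB k /\ ~ Iv p r k))^2 <= 1.
Proof.
  intros Hbd Hx HI Hno HiA HiB Ap Br Hpr.
  assert (Hab : iA <> iB) by (intros ->; apply (Hno iB); auto).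
  set (J := fun i => if Nat.eq_dec i iA then (fun k => (I iA k \/ Iv p r k) \/ I iB k)
     else if Nat.eq_dec i iB then (fun _ => False) else (fun k => I i k /\ ~ Iv p r k)).
  assert (HJ : gfam n J).
  { split.
    - intros i Hi. unfold J. destruct (Nat.eq_dec i iA).
      + apply conv_union with r; auto. apply conv_union with p; auto.
        apply (conv_of_fam n); auto. apply conv_iv. unfold Iv; lia.
        apply (conv_of_fam n); auto. right; unfold Iv; lia.
      + destruct (Nat.eq_dec i iB). apply conv_empty.
        apply conv_diff_iv; auto. apply (conv_of_fam n); auto.
    - intros i j Hi Hj Hij k. unfold J.
      assert (Hdisj : forall a b, (a < n)%nat -> (b < n)%nat -> a <> b -> I a k -> I b k -> False).
      { intros a b Ha Hb Hab0 A B. apply (proj2 HI a b Ha Hb Hab0 k); auto. }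
      destruct (Nat.eq_dec i iA) as [ei|ei]; destruct (Nat.eq_dec j iA) as [ej|ej]; [lia| | |];
      try (destruct (Nat.eq_dec j iB) as [fj|fj]); try (destruct (Nat.eq_dec i iB) as [fi|fi]);
      intros [X Y];
      repeat match goal with H: _ \/ _ |- _ => destruct H | H : _ /\ _ |- _ => destruct H end;
      try tauto;
      match goal with H1 : I ?a k, H2 : I ?b k |- _ => apply (Hdisj a b); auto; lia end. }
  assert (B := gfam_bd x 1 n J Hbd HJ). rewrite family_sq_fs in B.
  set (g0 := fun i => (isum x (fun k => I i k /\ ~ Iv p r k))^2).
  set (g1 := fun i => if Nat.eq_dec i iA then (Rabs (isum x (J iA)))^2 else g0 i).
  rewrite (fs_update n _ g1 iB) in B; auto.
  2:{ intros i Hi Hne. unfold g1. destruct (Nat.eq_dec i iA) as [e|e]. subst; reflexivity.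
      unfold J. destruct (Nat.eq_dec i iA); [lia|].
      destruct (Nat.eq_dec i iB); [lia|]. apply pow2_abs. }
  rewrite (fs_update n g1 g0 iA) in B; auto.
  2:{ intros i Hi Hne. unfold g1. destruct (Nat.eq_dec i iA); auto; lia. }
  unfold g1 in B. destruct (Nat.eq_dec iA iA); [|lia]. destruct (Nat.eq_dec iB iA); [lia|].
  unfold J at 2 in B. destruct (Nat.eq_dec iB iA); [lia|]. destruct (Nat.eq_dec iB iB); [|lia].

  rewrite (isum_empty x (fun _ => False)) in B by (intros k F; exact F). rewrite Rabs_R0 in B.
  unfold J in B. destruct (Nat.eq_dec iA iA); [|lia]. rewrite pow2_abs in B.
  assert (gA : ex_series (restrict x (I iA))) by (apply interval_good; auto; apply (conv_of_fam n); auto).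
  assert (gB : ex_series (restrict x (I iB))) by (apply interval_good; auto; apply (conv_of_fam n); auto).
  assert (gDA := good_diff x (I iA) (Iv p r) r gA (fun k H => proj2 H)).
  assert (gDB := good_diff x (I iB) (Iv p r) r gB (fun k H => proj2 H)).
  assert (gV := iv_good x p r (Iv p r) (fun k H => H)).
  destruct (good_union x _ _ gDA gV (fun k H => proj2 (proj1 H) (proj2 H))) as [gU EU].
  assert (Hd2 : forall k, ~ (((I iA k /\ ~ Iv p r k) \/ Iv p r k) /\ (I iB k /\ ~ Iv p r k))).
  { intros k [[[A _]|A] [C D]]; auto. apply (proj2 HI iA iB) with k; auto. }
  destruct (good_union x _ _ gU gDB Hd2) as [_ EU2].
  rewrite (isum_ext x (fun k => (I iA k \/ Iv p r k) \/ I iB k)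
     (fun k => ((I iA k /\ ~ Iv p r k) \/ Iv p r k) \/ (I iB k /\ ~ Iv p r k))) in B.
  2:{ intros k; split; [intros [[A|A]|A]; destruct (classic (Iv p r k))|]; tauto. }
  rewrite EU2, EU in B. unfold g0 in *. replace (0^2) with 0 in B by ring. lra.
Qed.

Lemma key x p r n I : fam_bd x 1 -> ex_series x -> (p < r)%nat -> HNPR x p r ->
  isum (gsq x) (Iv p r) < (isum x (Iv p r))^2 ->
  disjoint_family n I -> (forall i, (i<n)%nat -> ~(I i p /\ I i r)) ->
  family_sq x n I <= 1 - ((isum x (Iv p r))^2 - isum (gsq x) (Iv p r)).
Proof.
  intros Hbd Hx Hpr HN Hf HI Hno.
  set (s := isum x (Iv p r)) in *. set (q := isum (gsq x) (Iv p r)) in *.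
  set (u := fun i => isum x (fun k => I i k /\ ~ Iv p r k)).
  set (v := fun i => isum x (fun k => I i k /\ Iv p r k)).
  assert (gI : forall i, (i < n)%nat -> ex_series (restrict x (I i))).
  { intros i Hi; apply interval_good; auto; apply (conv_of_fam n); auto. }
  assert (F1 : forall i, (i < n)%nat -> isum x (I i) = u i + v i).
  { intros i Hi. unfold u, v.
    rewrite <- (proj2 (good_union x _ _ (good_diff x (I i) (Iv p r) r (gI i Hi) (fun k H => proj2 H))
       (iv_good x p r _ (fun k H => proj2 H)) (fun k H => proj2 (proj1 H) (proj2 (proj2 H))))).
    apply isum_ext. intros k; split; [intros A; destruct (classic (Iv p r k))|]; tauto. }
  assert (E : family_sq x n I = fs n (fun i => u i ^2) + 2 * fs n (fun i => u i * v i) + fs n (fun i => v i ^2)).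
  { rewrite family_sq_fs. rewrite <- fs_scal, <- !fs_plus. apply fs_ext. intros i Hi.
    rewrite pow2_abs, F1 by auto. ring. }
  assert (F2 : fs n (fun i => v i ^2) <= q).
  { apply Rle_trans with (fs n (fun i => isum (gsq x) (fun k => I i k /\ Iv p r k))).
    - apply fs_le. intros i Hi. apply HN.
      + apply conv_inter. apply (conv_of_fam n); auto. apply conv_iv.
      + intros k H; apply H.
      + intros [[A _] [B _]]. apply (Hno i); auto.
    - apply fs_series_disj. apply gsq_nonneg. apply (iv_good _ p r); auto.
      intros i Hi k H; apply H.
      intros i j Hi Hj Hij k [[A _] [B _]]. apply (proj2 HI i j) with k; auto. }
  assert (F3 : forall i, (i < n)%nat -> u i * v i <=
      (if excluded_middle_informative (I i p) then Rmax 0 (u i * s) else 0) +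
      (if excluded_middle_informative (I i r) then Rmax 0 (u i * s) else 0)).
  { intros i Hi. assert (Ci := conv_of_fam n I i HI Hi).
    destruct (excluded_middle_informative (I i p)) as [Ap|Ap];
    destruct (excluded_middle_informative (I i r)) as [Ar|Ar].
    - exfalso; apply (Hno i); auto.
    - rewrite Rplus_0_r. apply sign_lemma. apply prefix_sign; auto.
    - rewrite Rplus_0_l. apply sign_lemma. apply prefix_sign; auto.
    - rewrite Rplus_0_r. destruct (classic (exists k, I i k /\ Iv p r k)) as [[k0 [A0 B0]]|Hn].
      + assert (u i = 0).
        { unfold u. apply isum_empty. intros k [A B]. unfold Iv in *.
          destruct (le_lt_dec p k).
          - apply Ar. apply (Ci k0 r k); auto; lia.
          - apply Ap. apply (Ci k p k0); auto; lia. }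
        rewrite H, Rmult_0_l; lra.
      + assert (v i = 0) by (unfold v; apply isum_empty; intros k Hk; apply Hn; eauto).
        rewrite H, Rmult_0_r; lra. }
  assert (Hdp : forall i j, (i < n)%nat -> (j < n)%nat -> i <> j -> ~ (I i p /\ I j p)).
  { intros i j Hi Hj Hij; apply (proj2 HI i j); auto. }
  assert (Hdr : forall i j, (i < n)%nat -> (j < n)%nat -> i <> j -> ~ (I i r /\ I j r)).
  { intros i j Hi Hj Hij; apply (proj2 HI i j); auto. }
  assert (F3' : fs n (fun i => u i * v i) <=
      fs n (fun i => if excluded_middle_informative (I i p) then Rmax 0 (u i * s) else 0) +
      fs n (fun i => if excluded_middle_informative (I i r) then Rmax 0 (u i * s) else 0)).
  { rewrite <- fs_plus. apply fs_le; auto. }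
  assert (G0 := G00 x p r n I Hbd HI Hno). fold s in G0.
  assert (Hq0 : 0 <= q).
  { apply Rle_trans with (fs 0 (fun _ => isum (gsq x) (Iv p r))). cbn [fs]; lra.
    apply (fs_series_disj _ 0 (fun _ => Iv p r)). apply gsq_nonneg. apply (iv_good _ p r); auto.
    intros; lia. intros; lia. }
  assert (Hs2 : 0 < s^2) by lra.
  change (fs n (fun i => (isum x (fun k => I i k /\ ~ Iv p r k))^2)) with (fs n (fun i => u i ^2)) in G0.
  assert (Goal : fs n (fun i => u i ^2) + 2 * fs n (fun i => u i * v i) + s^2 <= 1).
  { destruct (classic (exists i, (i < n)%nat /\ I i p)) as [[iA [HA IA]]|NA];
    destruct (classic (exists i, (i < n)%nat /\ I i r)) as [[iB [HB IB]]|NB].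
    - rewrite (fs_unique n (fun i => I i p) _ iA) in F3' by (auto; intros j Hj Hne Ij; apply (Hdp j iA); auto).
      rewrite (fs_unique n (fun i => I i r) _ iB) in F3' by (auto; intros j Hj Hne Ij; apply (Hdr j iB); auto).
      assert (GA := G10 x p r n I iA p Hbd Hx HI Hno HA IA ltac:(unfold Iv; lia)).
      assert (GB := G10 x p r n I iB r Hbd Hx HI Hno HB IB ltac:(unfold Iv; lia)).
      assert (GAB := G11 x p r n I iA iB Hbd Hx HI Hno HA HB IA IB ltac:(lia)).
      fold s in GA, GB, GAB. fold (u iA) (u iB) in GA, GB, GAB.
      change (fs n (fun i => (isum x (fun k => I i k /\ ~ Iv p r k))^2)) with (fs n (fun i => u i ^2)) in GA, GB, GAB.
      unfold Rmax in F3'. destruct (Rle_dec 0 (u iA * s)), (Rle_dec 0 (u iB * s)).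
      + assert (0 <= u iA * u iB * s^2) by (replace (u iA * u iB * s^2) with ((u iA * s) * (u iB * s)) by ring; nra).
        assert (0 <= u iA * u iB).
        { destruct (Rle_lt_dec 0 (u iA * u iB)); auto.
          assert (u iA * u iB * s^2 < 0) by nra. lra. }
        assert (E1 : (u iA + s + u iB)^2 = u iA ^2 + u iB ^2 + s^2 + 2*(u iA * s) + 2*(u iB * s) + 2 * (u iA * u iB)) by ring.
        lra.
      + assert (E1 : (u iA + s)^2 = u iA ^2 + s^2 + 2*(u iA * s)) by ring. lra.
      + assert (E1 : (u iB + s)^2 = u iB ^2 + s^2 + 2*(u iB * s)) by ring. lra.
      + lra.
    - rewrite (fs_unique n (fun i => I i p) _ iA) in F3' by (auto; intros j Hj Hne Ij; apply (Hdp j iA); auto).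
      rewrite (fs_none n (fun i => I i r)) in F3' by (intros i Hi Ii; apply NB; eauto).
      assert (GA := G10 x p r n I iA p Hbd Hx HI Hno HA IA ltac:(unfold Iv; lia)).
      fold s in GA. fold (u iA) in GA.
      change (fs n (fun i => (isum x (fun k => I i k /\ ~ Iv p r k))^2)) with (fs n (fun i => u i ^2)) in GA.
      assert (E1 : (u iA + s)^2 = u iA ^2 + s^2 + 2*(u iA * s)) by ring.
      unfold Rmax in F3'. destruct (Rle_dec 0 (u iA * s)); lra.
    - rewrite (fs_unique n (fun i => I i r) _ iB) in F3' by (auto; intros j Hj Hne Ij; apply (Hdr j iB); auto).
      rewrite (fs_none n (fun i => I i p)) in F3' by (intros i Hi Ii; apply NA; eauto).
      assert (GB := G10 x p r n I iB r Hbd Hx HI Hno HB IB ltac:(unfold Iv; lia)).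
      fold s in GB. fold (u iB) in GB.
      change (fs n (fun i => (isum x (fun k => I i k /\ ~ Iv p r k))^2)) with (fs n (fun i => u i ^2)) in GB.
      assert (E1 : (u iB + s)^2 = u iB ^2 + s^2 + 2*(u iB * s)) by ring.
      unfold Rmax in F3'. destruct (Rle_dec 0 (u iB * s)); lra.
    - rewrite (fs_none n (fun i => I i r)) in F3' by (intros i Hi Ii; apply NB; eauto).
      rewrite (fs_none n (fun i => I i p)) in F3' by (intros i Hi Ii; apply NA; eauto).
      change (fs n (fun i => (isum x (fun k => I i k /\ ~ Iv p r k))^2)) with (fs n (fun i => u i ^2)) in G0.
      lra. }
  rewrite E. lra.
Qed.

Definition hpert (p r : nat) : nat -> R :=
  fun k => (if Nat.eq_dec k p then 1 else 0) - (if Nat.eq_dec k r then 1 else 0).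

Lemma isum_h p r T : isum (hpert p r) T = ind (T p) - ind (T r).
Proof.
  unfold isum.
  rewrite (Series_ext _ (fun k => (if Nat.eq_dec k p then ind (T p) else 0) - (if Nat.eq_dec k r then ind (T r) else 0))).
  - rewrite Series_minus. rewrite !Series_point; auto.
    apply ex_series_fin with p; intros k Hk; destruct (Nat.eq_dec k p); auto; lia.
    apply ex_series_fin with r; intros k Hk; destruct (Nat.eq_dec k r); auto; lia.
  - intros k. unfold restrict, hpert, ind.
    destruct (Nat.eq_dec k p), (Nat.eq_dec k r); subst;
    repeat destruct (excluded_middle_informative _); try ring; try contradiction.
Qed.

Lemma isum_pert x p r t T : ex_series (restrict x T) ->
  isum (fun k => x k + t * hpert p r k) T = isum x T + t * isum (hpert p r) T.
Proof.
  intros H. unfold isum. rewrite <- Series_scal_l, <- Series_plus; auto.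
  - apply Series_ext. intros k. unfold restrict. destruct (excluded_middle_informative _); ring.
  - apply ex_series_scalR. apply ex_series_fin with (Nat.max p r). intros k Hk.
    unfold restrict, hpert. destruct (excluded_middle_informative _); auto.
    destruct (Nat.eq_dec k p), (Nat.eq_dec k r); try lia; ring.
Qed.

Lemma tw_le w t : w^2 <= 1 -> t * w <= Rabs t.
Proof.
  intros H. assert (Rabs w <= 1).
  { assert (0 <= Rabs w) by apply Rabs_pos. rewrite <- pow2_abs in H. nra. }
  apply Rle_trans with (Rabs (t * w)). apply Rle_abs. rewrite Rabs_mult.
  assert (0 <= Rabs t) by apply Rabs_pos. nra.
Qed.

Lemma perturb x p r δ t : fam_bd x 1 -> ex_series x -> p <> r -> 0 < δ <= 1 -> Rabs t <= δ/8 ->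
  (forall n I, disjoint_family n I -> (forall i, (i<n)%nat -> ~(I i p /\ I i r)) -> family_sq x n I <= 1 - δ) ->
  fam_bd (fun k => x k + t * hpert p r k) 1.
Proof.
  intros Hbd Hx Hpr Hd Ht Hkey n I HI.
  rewrite family_sq_fs.
  rewrite (fs_ext n _ (fun i => (isum x (I i) + t * (ind (I i p) - ind (I i r)))^2)).
  2:{ intros i Hi. rewrite pow2_abs, isum_pert, isum_h; auto.
      apply interval_good; auto. apply (conv_of_fam n); auto. }
  destruct (classic (exists i, (i < n)%nat /\ I i p /\ I i r)) as [[i0 [Hi0 [P0 R0]]]|Hno].
  - rewrite (fs_ext n _ (fun i => (Rabs (isum x (I i)))^2)).
    rewrite <- family_sq_fs. apply Hbd; auto.
    intros i Hi. rewrite pow2_abs. unfold ind.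
    destruct (Nat.eq_dec i i0).
    + subst. repeat destruct (excluded_middle_informative _); try contradiction; ring.
    + repeat destruct (excluded_middle_informative _); try ring.
      * exfalso; apply (proj2 HI i i0 Hi Hi0 n0 p); auto.
      * exfalso; apply (proj2 HI i i0 Hi Hi0 n0 p); auto.
      * exfalso; apply (proj2 HI i i0 Hi Hi0 n0 r); auto.
  - assert (Hb : family_sq x n I <= 1 - δ).
    { apply Hkey; auto. intros i Hi [A B]; apply Hno; eauto. }
    rewrite family_sq_fs in Hb.
    assert (Hpt : forall i, (i < n)%nat -> (isum x (I i) + t * (ind (I i p) - ind (I i r)))^2 <=
        Rabs (isum x (I i)) ^ 2 + (2 * Rabs t + t^2) * (ind (I i p) + ind (I i r))).
    { intros i Hi. rewrite pow2_abs.
      assert (Hw : (isum x (I i))^2 <= 1) by (apply (single_bd x 1); auto; apply (conv_of_fam n); auto).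
      assert (T1 := tw_le _ t Hw). assert (T2 := tw_le _ (-t) Hw). rewrite Rabs_Ropp in T2.
      assert (0 <= Rabs t) by apply Rabs_pos.
      unfold ind. repeat destruct (excluded_middle_informative _); nra. }
    apply Rle_trans with (fs n (fun i => Rabs (isum x (I i)) ^ 2 + (2 * Rabs t + t^2) * (ind (I i p) + ind (I i r)))).
    + apply fs_le; auto.
    + rewrite fs_plus, fs_scal, fs_plus.
      assert (Fp : fs n (fun i => ind (I i p)) <= 1).
      { apply (fs_disj_le n (fun i => I i p) 1). lra. intros i j Hi Hj Hij; apply (proj2 HI i j); auto. }
      assert (Fr : fs n (fun i => ind (I i r)) <= 1).
      { apply (fs_disj_le n (fun i => I i r) 1). lra. intros i j Hi Hj Hij; apply (proj2 HI i j); auto. }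
      assert (0 <= Rabs t) by apply Rabs_pos.
      assert (Et : t^2 = Rabs t ^2) by (rewrite pow2_abs; auto).
      assert (0 <= fs n (fun i => ind (I i p))) by (apply fs_nonneg; intros; unfold ind; destruct (excluded_middle_informative _); lra).
      assert (0 <= fs n (fun i => ind (I i r))) by (apply fs_nonneg; intros; unfold ind; destruct (excluded_middle_informative _); lra).
      assert (0 <= 2 * Rabs t + t^2) by nra.
      assert ((2 * Rabs t + t^2) * (fs n (fun i => ind (I i p)) + fs n (fun i => ind (I i r))) <= (2 * Rabs t + t^2) * 2).
      { apply Rmult_le_compat_l; lra. }
      nra.
Qed.

Lemma sum_n_fs (a : nat -> R) N : sum_n a N = fs (S N) a.
Proof.
  induction N. rewrite sum_O. cbn [fs]. rewrite Rplus_0_l. reflexivity.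
  rewrite sum_Sn, IHN. cbn [fs]. reflexivity.
Qed.

Lemma isum_nonneg g T : (forall k, 0 <= g k) -> ex_series (restrict g T) -> 0 <= isum g T.
Proof.
  intros Hg H. unfold isum. rewrite <- Series_zero. apply Series_le; auto.
  intros k. unfold restrict. destruct (excluded_middle_informative _); split; auto; lra.
Qed.

Lemma l2_bd x M : fam_bd x M -> ex_series (gsq x) /\ Series (gsq x) <= M.
Proof.
  intros H.
  assert (Hs : forall N, sum_n (gsq x) N <= M).
  { intros N. rewrite sum_n_fs.
    assert (Hf : disjoint_family (S N) (fun i => fun k => k = i)).
    { split. intros i Hi. split. exists i; auto. intros a b c ? ? ? ?; lia.
      intros i j Hi Hj Hij k [A B]; lia. }
    assert (B := H _ _ Hf). rewrite family_sq_fs in B.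
    rewrite (fs_ext (S N) (gsq x) (fun i => Rabs (isum x (fun k => k = i))^2)). exact B.
    intros i Hi; rewrite isum_single; reflexivity. }
  assert (Hinc : forall N, sum_n (gsq x) N <= sum_n (gsq x) (S N)).
  { intros N. rewrite sum_Sn. assert (0 <= gsq x (S N)) by apply gsq_nonneg.
    change (sum_n (gsq x) N <= sum_n (gsq x) N + gsq x (S N)). lra. }
  assert (Hex : ex_finite_lim_seq (sum_n (gsq x))) by (apply ex_finite_lim_seq_incr with M; auto).
  assert (Hl := Lim_seq_correct' _ Hex).
  destruct Hex as [l Hl'].
  assert (E : Lim_seq (sum_n (gsq x)) = l) by (apply is_lim_seq_unique; auto).
  rewrite E in Hl.
  split.
  - exists l. exact Hl'.
  - unfold Series. rewrite E. simpl.
    assert (Rbar_le l M). { apply (is_lim_seq_le (sum_n (gsq x)) (fun _ => M) l M); auto. apply is_lim_seq_const. }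
    simpl in H0. auto.
Qed.

Lemma npr_iv_single x c : (isum x (Iv c c))^2 <= isum (gsq x) (Iv c c).
Proof.
  rewrite (isum_ext x _ (fun k => k = c)), (isum_ext (gsq x) _ (fun k => k = c)) by (intros; unfold Iv; lia).
  rewrite !isum_single. unfold gsq. rewrite pow2_abs. lra.
Qed.

Lemma npr_iv_empty x c d : (d < c)%nat -> (isum x (Iv c d))^2 <= isum (gsq x) (Iv c d).
Proof.
  intros H. rewrite !isum_empty by (intros k; unfold Iv; lia). lra.
Qed.

Lemma ext_NPR_iv x : extreme_BJ x -> forall len c d, (d - c <= len)%nat ->
  (isum x (Iv c d))^2 <= isum (gsq x) (Iv c d).
Proof.
  intros Hext. assert (Hbd : fam_bd x 1) by (apply BJ_bd; apply Hext).
  assert (Hx : ex_series x) by (apply (bd_ex_series x 1); auto).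
  induction len; intros c d Hl.
  - destruct (lt_eq_lt_dec c d) as [[H|H]|H]. lia. subst; apply npr_iv_single. apply npr_iv_empty; auto.
  - destruct (le_lt_dec (d - c) len) as [Hle|Hgt]. apply IHlen; auto.
    apply Rnot_lt_le. intros Hf.
    assert (Hcd : (c < d)%nat) by lia.
    assert (HN : HNPR x c d).
    { intros T HT Hsub Hn.
      destruct (classic (exists k, T k)) as [Hne|Hem].
      - destruct (conv_rep T d HT Hne) as [c' [d' [Hcd' E]]].
        { intros k Tk; apply Hsub in Tk; unfold Iv in Tk; lia. }
        assert (c <= c')%nat by (assert (Tc : T c') by (apply E; lia); apply Hsub in Tc; unfold Iv in Tc; lia).
        assert (d' <= d)%nat by (assert (Td : T d') by (apply E; lia); apply Hsub in Td; unfold Iv in Td; lia).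
        assert (Hne2 : ~ (c' = c /\ d' = d)).
        { intros [-> ->]. apply Hn; split; apply E; lia. }
        rewrite (isum_ext x T (Iv c' d')), (isum_ext (gsq x) T (Iv c' d')) by (intros k; rewrite E; unfold Iv; lia).
        apply IHlen. lia.
      - rewrite !isum_empty by (intros k Tk; apply Hem; eauto). lra. }
    set (δ := (isum x (Iv c d))^2 - isum (gsq x) (Iv c d)).
    assert (Hq : 0 <= isum (gsq x) (Iv c d)) by (apply isum_nonneg; [apply gsq_nonneg | apply (iv_good _ c d); auto]).
    assert (Hs : (isum x (Iv c d))^2 <= 1) by (apply (single_bd x 1); auto; apply conv_iv).
    assert (Hd : 0 < δ <= 1) by (unfold δ; lra).
    assert (Hkey : forall n I, disjoint_family n I -> (forall i, (i<n)%nat -> ~(I i c /\ I i d)) -> family_sq x n I <= 1 - δ).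
    { intros n I HI Hno. apply key; auto. }
    assert (Hy := perturb x c d δ (δ/8) Hbd Hx ltac:(lia) Hd ltac:(rewrite Rabs_pos_eq; lra) Hkey).
    assert (Hz := perturb x c d δ (-(δ/8)) Hbd Hx ltac:(lia) Hd ltac:(rewrite Rabs_Ropp, Rabs_pos_eq; lra) Hkey).
    apply bd_BJ in Hy. apply bd_BJ in Hz.
    assert (Hxyz : forall k, x k = 1/2 * (x k + δ/8 * hpert c d k) + (1 - 1/2) * (x k + -(δ/8) * hpert c d k)) by (intros; field).
    assert (E' := proj2 Hext _ _ (1/2) Hy Hz ltac:(lra) Hxyz c). simpl in E'.
    unfold hpert in E'. destruct (Nat.eq_dec c c); [|lia]. destruct (Nat.eq_dec c d); [lia|]. lra.
Qed.

Lemma NPR_all x : ex_series x -> fam_bd x 1 ->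
  (forall c d, (isum x (Iv c d))^2 <= isum (gsq x) (Iv c d)) ->
  forall T, convex T -> (isum x T)^2 <= isum (gsq x) T.
Proof.
  intros Hx Hbd Hiv T HT.
  assert (Hfin : forall N, (sum_n (restrict x T) N)^2 <= sum_n (restrict (gsq x) T) N).
  { intros N.
    set (TN := fun k => T k /\ (k <= N)%nat).
    assert (E1 : sum_n (restrict x T) N = isum x TN).
    { unfold isum. rewrite (Series_fin _ N).
      apply sum_n_ext_loc. intros k Hk. unfold restrict, TN.
      repeat destruct (excluded_middle_informative _); auto; tauto.
      intros k Hk. unfold restrict, TN. destruct (excluded_middle_informative _); auto; lia. }
    assert (E2 : sum_n (restrict (gsq x) T) N = isum (gsq x) TN).
    { unfold isum. rewrite (Series_fin _ N).
      apply sum_n_ext_loc. intros k Hk. unfold restrict, TN.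
      repeat destruct (excluded_middle_informative _); auto; tauto.
      intros k Hk. unfold restrict, TN. destruct (excluded_middle_informative _); auto; lia. }
    rewrite E1, E2.
    destruct (classic (exists k, TN k)) as [Hne|Hem].
    - destruct (conv_rep TN N) as [c [d [_ E]]]; auto.
      apply conv_inter; auto. intros a b c0 ? ? ? ?; lia.
      intros k [_ Hk]; auto.
      rewrite (isum_ext x TN (Iv c d)), (isum_ext (gsq x) TN (Iv c d)) by (intros k; rewrite E; unfold Iv; lia).
      apply Hiv.
    - rewrite !isum_empty by (intros k Tk; apply Hem; eauto). lra. }
  destruct (l2_bd x 1 Hbd) as [Hg _].
  assert (Hg2 : ex_series (restrict (gsq x) T)).
  { apply ex_series_leR with (gsq x); auto. intros k. unfold restrict.
    destruct (excluded_middle_informative _). rewrite Rabs_pos_eq; [lra|apply gsq_nonneg].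
    rewrite Rabs_R0; apply gsq_nonneg. }
  assert (L1 : is_lim_seq (sum_n (restrict x T)) (isum x T)).
  { apply (Series_correct (restrict x T)). apply interval_good; auto. }
  assert (L2 : is_lim_seq (sum_n (restrict (gsq x) T)) (isum (gsq x) T)).
  { apply (Series_correct (restrict (gsq x) T)). auto. }
  assert (L3 := is_lim_seq_mult' _ _ _ _ L1 L1).
  assert (Rbar_le (isum x T * isum x T) (isum (gsq x) T)).
  { assert (Hf' : forall N, sum_n (restrict x T) N * sum_n (restrict x T) N <= sum_n (restrict (gsq x) T) N).
    { intros N. eapply Rle_trans; [|apply (Hfin N)]. right; ring. }
    apply (is_lim_seq_le _ _ _ _ Hf' L3 L2). }
  simpl in H. replace ((isum x T)^2) with (isum x T * isum x T) by ring. lra.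
Qed.

Lemma restrict_True g k : restrict g (fun _ => True) k = g k.
Proof. unfold restrict. destruct (excluded_middle_informative True); auto. tauto. Qed.

Lemma isum_True g : isum g (fun _ => True) = Series g.
Proof. unfold isum. apply Series_ext. apply restrict_True. Qed.

Lemma term_le_series (d : nat -> R) k : (forall j, 0 <= d j) -> ex_series d -> d k <= Series d.
Proof.
  intros H Hd. rewrite <- isum_True, <- (isum_single d k).
  assert (B := fs_series_disj d 1 (fun _ => fun j => j = k) (fun _ => True) H).
  cbn [fs] in B. rewrite Rplus_0_l in B. apply B.
  apply (ex_series_extR d). intros; rewrite restrict_True; auto. auto.
  intros; auto. intros; lia.
Qed.

Lemma NPR_conv x I : NPR (restrict x I) <-> (isum x I)^2 <= isum (gsq x) I.
Proof.
  unfold NPR, isum. rewrite pow2_abs.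
  rewrite (Series_ext (fun n => Rabs (restrict x I n) ^ 2) (restrict (gsq x) I)). tauto.
  intros k. unfold restrict, gsq. destruct (excluded_middle_informative _); auto. rewrite Rabs_R0; ring.
Qed.

Lemma fam_from_npr x : ex_series (gsq x) -> (forall T, convex T -> (isum x T)^2 <= isum (gsq x) T) ->
  fam_bd x (Series (gsq x)).
Proof.
  intros Hg H n I HI. rewrite family_sq_fs.
  apply Rle_trans with (fs n (fun i => isum (gsq x) (I i))).
  - apply fs_le. intros i Hi. rewrite pow2_abs. apply H. apply (conv_of_fam n); auto.
  - rewrite <- isum_True. apply fs_series_disj. apply gsq_nonneg.
    apply (ex_series_extR (gsq x)); auto. intros; rewrite restrict_True; auto.
    auto. apply (proj2 HI).
Qed.

Lemma fam_scal x c M : fam_bd x M -> fam_bd (fun k => c * x k) (c^2 * M).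
Proof.
  intros H n I HI. rewrite family_sq_fs.
  rewrite (fs_ext n _ (fun i => c^2 * Rabs (isum x (I i))^2)).
  rewrite fs_scal, <- family_sq_fs. apply Rmult_le_compat_l. apply pow2_ge_0. apply H; auto.
  intros i Hi. unfold isum. rewrite (Series_ext _ (fun k => c * restrict x (I i) k)).
  rewrite Series_scal_l, !pow2_abs. ring.
  intros k; unfold restrict; destruct (excluded_middle_informative _); ring.
Qed.

Lemma fam_weaken x M M' : fam_bd x M -> M <= M' -> fam_bd x M'.
Proof. intros H Hm n I HI. apply Rle_trans with M; auto. Qed.

Lemma fam_e0 c : c^2 = 1 -> fam_bd (fun k => if Nat.eq_dec k 0 then c else 0) 1.
Proof.
  intros Hc n I HI. rewrite family_sq_fs.
  apply Rle_trans with (fs n (fun i => ind (I i 0%nat))).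
  - apply fs_le. intros i Hi. unfold isum.
    rewrite (Series_ext _ (fun k => if Nat.eq_dec k 0 then c * ind (I i 0%nat) else 0)).
    rewrite Series_point, pow2_abs. unfold ind. destruct (excluded_middle_informative _); nra.
    intros k. unfold restrict, ind. destruct (Nat.eq_dec k 0); subst;
    destruct (excluded_middle_informative _); try ring.
  - apply (fs_disj_le n (fun i => I i 0%nat) 1). lra. intros i j Hi Hj Hij; apply (proj2 HI i j); auto.
Qed.

Theorem corollary3p19 (x : nat -> R) (hx : inJ x) :
  extreme_BJ x <-> (NPR_hered x /\ l2norm x = 1).
Proof.
  split.
  - intros Hext.
    assert (Hbd : fam_bd x 1) by (apply BJ_bd; apply Hext).
    assert (Hx : ex_series x) by (apply (bd_ex_series x 1); auto).
    assert (Hiv : forall c d, (isum x (Iv c d))^2 <= isum (gsq x) (Iv c d)).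
    { intros c d. apply (ext_NPR_iv x Hext (d - c)); lia. }
    assert (Hall := NPR_all x Hx Hbd Hiv).
    destruct (l2_bd x 1 Hbd) as [Hg HQ1].
    split.
    + intros I HI. apply NPR_conv. apply Hall. exact (proj2 HI).
    + unfold l2norm. change (Series (fun n => Rabs (x n) ^ 2)) with (Series (gsq x)).
      assert (HQ : Series (gsq x) = 1).
      { apply Rle_antisym; auto. apply Rnot_lt_le. intros HQlt.
        set (Q := Series (gsq x)) in *.
        assert (HQ0 : 0 <= Q).
        { unfold Q. rewrite <- Series_zero. apply Series_le; auto. intros; split; [lra|apply gsq_nonneg]. }
        assert (HF := fam_from_npr x Hg Hall). fold Q in HF.
        set (η := (1 - Q)/2).
        assert (Hy : in_BJ (fun k => (1 + η) * x k)).
        { apply bd_BJ. apply fam_weaken with ((1 + η)^2 * Q). apply fam_scal; auto.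
          unfold η. assert (0 <= (1 - Q)^2 * (4 - Q)) by (apply Rmult_le_pos; [apply pow2_ge_0|lra]). nra. }
        assert (Hz : in_BJ (fun k => (1 - η) * x k)).
        { apply bd_BJ. apply fam_weaken with ((1 - η)^2 * Q). apply fam_scal; auto.
          unfold η. nra. }
        assert (Hxyz : forall k, x k = 1/2 * ((1 + η) * x k) + (1 - 1/2) * ((1 - η) * x k)) by (intros; field).
        assert (Ez := proj2 Hext _ _ (1/2) Hy Hz ltac:(lra) Hxyz).
        assert (H0 : forall k, x k = 0).
        { intros k. assert (E := Ez k). simpl in E. assert (0 < η) by (unfold η; lra). nra. }
        assert (Hp : in_BJ (fun k => if Nat.eq_dec k 0 then 1 else 0)) by (apply bd_BJ, fam_e0; ring).
        assert (Hm : in_BJ (fun k => if Nat.eq_dec k 0 then -1 else 0)) by (apply bd_BJ, fam_e0; ring).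
        assert (Hxe : forall k, x k = 1/2 * (if Nat.eq_dec k 0 then 1 else 0) + (1 - 1/2) * (if Nat.eq_dec k 0 then -1 else 0)).
        { intros k. rewrite H0. destruct (Nat.eq_dec k 0); field. }
        assert (E0 := proj2 Hext _ _ (1/2) Hp Hm ltac:(lra) Hxe 0%nat). simpl in E0. lra. }
      rewrite HQ. apply sqrt_1.
  - intros [Hn Hl].
    destruct (inJ_bd x hx) as [M HM]. destruct (l2_bd x M HM) as [Hg _].
    assert (HQ0 : 0 <= Series (gsq x)).
    { rewrite <- Series_zero. apply Series_le; auto. intros; split; [lra|apply gsq_nonneg]. }
    assert (HQ : Series (gsq x) = 1).
    { unfold l2norm in Hl. change (Series (fun n => Rabs (x n) ^ 2)) with (Series (gsq x)) in Hl.
      rewrite <- (sqrt_sqrt (Series (gsq x))), Hl by auto. ring. }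
    assert (Hall : forall T, convex T -> (isum x T)^2 <= isum (gsq x) T).
    { intros T HT. destruct (classic (exists k, T k)) as [Hne|Hem].
      - apply NPR_conv. apply Hn. split; auto.
      - rewrite !isum_empty by (intros k Tk; apply Hem; eauto). lra. }
    assert (Hbd : fam_bd x 1) by (rewrite <- HQ; apply fam_from_npr; auto).
    split. apply bd_BJ; auto.
    intros y z t Hy Hz Ht Hxyz k.
    apply BJ_bd in Hy. apply BJ_bd in Hz.
    destruct (l2_bd y 1 Hy) as [Hgy Hy1]. destruct (l2_bd z 1 Hz) as [Hgz Hz1].
    set (d := fun k => (y k - z k)^2).
    assert (Hd0 : forall k, 0 <= d k) by (intros; apply pow2_ge_0).
    assert (Hgd : ex_series d).
    { apply ex_series_leR with (fun k => 2 * gsq y k + 2 * gsq z k).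
      intros j. rewrite Rabs_pos_eq by auto. unfold d, gsq. cbv beta. rewrite !pow2_abs. pose proof (pow2_ge_0 (y j + z j)). nra.
      apply ex_series_plusR; apply ex_series_scalR; auto. }
    assert (E : Series (gsq x) = t * Series (gsq y) + (1 - t) * Series (gsq z) - (t * (1 - t)) * Series d).
    { rewrite <- !Series_scal_l, <- Series_plus, <- Series_minus.
      apply Series_ext. intros j. unfold gsq, d. rewrite !pow2_abs, Hxyz. ring.
      apply ex_series_plusR; apply ex_series_scalR; auto.
      apply ex_series_scalR; auto.
      apply ex_series_scalR; auto.
      apply ex_series_scalR; auto. }
    assert (Hsd : Series d <= 0).
    { assert (0 < t * (1 - t)) by nra. nra. }
    assert (Hk := term_le_series d k Hd0 Hgd).
    assert (Hdk : d k = 0) by (specialize (Hd0 k); lra).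
    unfold d in Hdk. nra.
Qed.
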